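(* Assume $\widetilde p_i\propto i^{-\beta}$ for a constant $\beta>1$, $M=\omega_K(1)$, and total training time $T\eqsim M^\beta$. Let $\alpha\in(0,1)$ and run GD with learning rate $\eta$ satisfying $\eta p_1\lesssim1$ from $\mathbf{W}_0=\mathbf{0}$. Then $$\mathcal{L}^{\mathrm{GD}}(T)-\mathcal{L}^*\gtrsim\frac{\log K}{T^{1-1/\beta}}.$$
   Context: Setup: $K=MC$ items in $M$ groups of $C$ items (group $i$: indices $(i-1)C+1,\dots,iC$); $\widetilde p_1>\dots>\widetilde p_M>0$, $\sum_i\widetilde p_i=1$, $p_j=\widetilde p_i/C$ for $j$ in group $i$. $\mathbf{E},\widetilde{\mathbf{E}}\in\mathbb{R}^{K\times K}$ have orthonormal columns. Noise: $p_{i\mid j}=1-\alpha+\alpha/K$ if $i=j$, $\alpha/K$ otherwise. $\widehat p_{i\mid j}(\mathbf{W})=\exp(\widetilde{\mathbf{E}}_i^\top\mathbf{W}\mathbf{E}_j)/\sum_k\exp(\widetilde{\mathbf{E}}_k^\top\mathbf{W}\mathbf{E}_j)$; $\mathcal{L}(\mathbf{W})=-\sum_jp_j\sum_ip_{i\mid j}\log\widehat p_{i\mid j}(\mathbf{W})$, with minimal value $\mathcal{L}^*=-\big(1-\alpha+\tfrac{\alpha}{K}\big)\log\big(1-\alpha+\tfrac{\alpha}{K}\big)-\tfrac{\alpha(K-1)}{K}\log\tfrac{\alpha}{K}$. GD: $\mathbf{W}_{t+1}=\mathbf{W}_t-\eta\nabla\mathcal{L}(\mathbf{W}_t)$, $\mathcal{L}^{\mathrm{GD}}(T)=\mathcal{L}(\mathbf{W}_T)$.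 Regime $K\gg1$, $M\ll C$; $\omega_K(1)$ denotes a quantity tending to infinity as $K\to\infty$; $\eqsim,\lesssim,\gtrsim$ hide constant factors. *)

(* Defs.v *)
From HB Require Import structures.
From mathcomp Require Import all_boot all_order all_algebra.
From mathcomp Require Import all_classical all_reals all_analysis.
Set Implicit Arguments. Unset Strict Implicit. Unset Printing Implicit Defensive.
Import Order.TTheory GRing.Theory Num.Theory.
Local Open Scope ring_scope.

(* group probabilities, groups indexed 0..M-1 (group i corresponds to paper's i+1):
   ptil i = (i+1)^(-beta) / sum_{k<M} (k+1)^(-beta) *)
Definition ptil (R : realType) (beta : R) (M : nat) (i : nat) : R :=
  ((i.+1)%:R `^ (- beta)) / \sum_(k < M) ((k.+1)%:R `^ (- beta)).

(* item j (0-indexed) belongs to group j %/ C; p_j = ptil (j / C) / C *)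
Definition pitem (R : realType) (beta : R) (M C : nat) (j : 'I_(M * C)) : R :=
  ptil beta M (j %/ C) / C%:R.

Definition pcond (R : realType) (alpha : R) (K : nat) (i j : 'I_K) : R :=
  if i == j then 1 - alpha + alpha / K%:R else alpha / K%:R.

(* model softmax: logits Et_i^T W E_j = (Et^T W E)_{ij} *)
Definition phat (R : realType) (K : nat) (E Et W : 'M[R]_K) (i j : 'I_K) : R :=
  expR ((Et^T *m W *m E) i j) / \sum_(k < K) expR ((Et^T *m W *m E) k j).

Definition loss (R : realType) (beta alpha : R) (M C : nat)
    (E Et : 'M[R]_(M * C)) (W : 'M[R]_(M * C)) : R :=
  - \sum_(j < M * C) @pitem R beta M C j *
      \sum_(i < M * C) @pcond R alpha (M * C) i j * ln (@phat R (M * C) E Et W i j).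

Definition grad (R : realType) (K : nat) (f : 'M[R]_K -> R) (W : 'M[R]_K) : 'M[R]_K :=
  \matrix_(i, j) derive1 (fun t : R => f (W + t *: delta_mx i j)) 0.

Definition gd_iter (R : realType) (K : nat) (f : 'M[R]_K -> R) (eta : R) (T : nat)
  : 'M[R]_K := iter T (fun W => W - eta *: grad f W) 0.

Definition Lstar (R : realType) (alpha : R) (K : nat) : R :=
  - (1 - alpha + alpha / K%:R) * ln (1 - alpha + alpha / K%:R)
  - alpha * (K%:R - 1) / K%:R * ln (alpha / K%:R).

(* Main.v *)
Require Import Defs.
From HB Require Import structures.
From mathcomp Require Import all_boot all_order all_algebra.
From mathcomp Require Import all_classical all_reals all_analysis.
From mathcomp.algebra_tactics Require Import ring lra.
From mathcomp Require Import zify.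
Import Order.TTheory GRing.Theory Num.Theory.
Local Open Scope ring_scope.
Lemma powRE' {R : realType} (a x : R) : 0 < a -> a `^ x = expR (x * ln a).
Proof. by move=> a0; rewrite /powR gt_eqF. Qed.

Lemma is_derive_sumf {R : realType} n (h : 'I_n -> R -> R) (x : R) (dh : 'I_n -> R) :
  (forall i, is_derive x 1 (h i) (dh i)) ->
  is_derive x 1 (fun y => \sum_(i < n) h i y) (\sum_(i < n) dh i).
Proof.
move=> H; have := is_derive_sum H.
by rewrite fct_sumE.
Qed.

Lemma is_derive_cM {R : realType} (c : R) (f : R -> R) (x df : R) :
  is_derive x 1 f df -> is_derive x 1 (fun y => c * f y) (c * df).
Proof.
move=> H.
have := is_deriveM (is_derive_cst c x 1) H.
rewrite /GRing.scale /= mulr0 addr0 => H2.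
exact: H2.
Qed.

Lemma is_derive_ext {R : realType} (f g : R -> R) (x df dg : R) :
  f = g -> df = dg -> is_derive x 1 f df -> is_derive x 1 g dg.
Proof. by move=> -> ->. Qed.

Lemma is_derive_aff {R : realType} (a b x : R) :
  is_derive x 1 (fun t => a + t * b) b.
Proof.
have := is_deriveD (is_derive_cst a x 1) (is_deriveM (is_derive_id x 1) (is_derive_cst b x 1)).
apply: is_derive_ext; first by apply/funext.
by rewrite /GRing.scale /= mulr0 mulr1 !add0r.
Qed.

Lemma is_derive_expaff {R : realType} (a b x : R) :
  is_derive x 1 (fun t => expR (a + t * b)) (expR (a + x * b) * b).
Proof.
have := (@is_derive1_comp R expR (fun t => a + t * b) x _ _ (is_derive_expR _) (is_derive_aff a b x)).
by apply: is_derive_ext.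
Qed.

Lemma is_deriveNf {R : realType} (f : R -> R) (x df : R) :
  is_derive x 1 f df -> is_derive x 1 (fun y => - f y) (- df).
Proof. move=> H; have := is_deriveN H; exact: is_derive_ext. Qed.

Lemma is_deriveBf {R : realType} (f g : R -> R) (x df dg : R) :
  is_derive x 1 f df -> is_derive x 1 g dg ->
  is_derive x 1 (fun y => f y - g y) (df - dg).
Proof. move=> H1 H2; have := is_deriveB H1 H2; exact: is_derive_ext. Qed.

Definition smx {R : realType} {n} (Z : 'M[R]_n) (i j : 'I_n) : R :=
  expR (Z i j) / \sum_(k < n) expR (Z k j).

Definition FZ {R : realType} {n} (pw : 'I_n -> R) (pc : 'I_n -> 'I_n -> R)
  (Z : 'M[R]_n) : R :=
  - \sum_(j < n) pw j * \sum_(i < n) pc i j * ln (smx Z i j).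

Lemma sumexp_gt0 {R : realType} n (f : 'I_n -> R) (i : 'I_n) :
  0 < \sum_(k < n) expR (f k).
Proof.
rewrite (bigD1 i) //=.
have : 0 <= \sum_(k < n | k != i) expR (f k) by apply: sumr_ge0 => k _; exact: expR_ge0.
have := expR_gt0 (f i).
lra.
Qed.

Lemma ln_smx {R : realType} n (Z : 'M[R]_n) i j :
  ln (smx Z i j) = Z i j - ln (\sum_(k < n) expR (Z k j)).
Proof.
rewrite /smx lnM ?posrE ?expR_gt0 ?invr_gt0 ?(sumexp_gt0 _ _ i) //.
by rewrite lnV ?posrE ?(sumexp_gt0 _ _ i) // expRK.
Qed.

Arguments is_derive_cM {R} c {f x df}.
Arguments is_derive_sumf {R n h x dh}.
Arguments is_deriveNf {R f x df}.
Arguments is_deriveBf {R f g x df dg}.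
Arguments is_derive_ext {R f g x df dg}.

Lemma deriv_FZ {R : realType} n (pw : 'I_n -> R) (pc : 'I_n -> 'I_n -> R)
  (Z D : 'M[R]_n) : (forall j, \sum_(i < n) pc i j = 1) ->
  is_derive (0:R) 1 (fun t => FZ pw pc (Z + t *: D))
    (\sum_(j < n) \sum_(i < n) pw j * (smx Z i j - pc i j) * D i j).
Proof.
move=> hpc.
pose S j t := \sum_(k < n) expR (Z k j + t * D k j).
have -> : (fun t => FZ pw pc (Z + t *: D)) = (fun t => - \sum_(j < n) pw j *
   \sum_(i < n) pc i j * ((Z i j + t * D i j) - ln (S j t))).
  apply/funext => t; rewrite /FZ; congr (- _); apply: eq_bigr => j _.
  congr (_ * _); apply: eq_bigr => i _; rewrite ln_smx !mxE.
  by congr (_ * (_ - ln _)); apply: eq_bigr => k _; rewrite !mxE.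
have hS : forall j, 0 < S j 0 by move=> j; apply: (sumexp_gt0 _ _ j).
have dS : forall j, is_derive (0:R) 1 (S j) (\sum_(k < n) expR (Z k j + 0 * D k j) * D k j).
  by move=> j; apply: is_derive_sumf => k; apply: is_derive_expaff.
have dlS : forall j, is_derive (0:R) 1 (fun t => ln (S j t))
   ((S j 0)^-1 * \sum_(k < n) expR (Z k j + 0 * D k j) * D k j).
  move=> j; have := @is_derive1_comp R (@ln R) (S j) 0 _ _ (is_derive1_ln (hS j)) (dS j).
  exact: is_derive_ext.
have := is_deriveNf (is_derive_sumf (fun j => is_derive_cM (pw j)
   (is_derive_sumf (fun i => is_derive_cM (pc i j)
      (is_deriveBf (is_derive_aff (Z i j) (D i j) 0) (dlS j)))))).
apply: is_derive_ext => //.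
rewrite -sumrN; apply: eq_bigr => j _.
have hS0 : S j 0 = \sum_(k < n) expR (Z k j).
  by apply: eq_bigr => k _; rewrite mul0r addr0.
have hT : \sum_(k < n) expR (Z k j + 0 * D k j) * D k j = \sum_(k < n) expR (Z k j) * D k j.
  by apply: eq_bigr => k _; rewrite mul0r addr0.
rewrite hS0 hT.
have hA : \sum_(i < n) smx Z i j * D i j =
   (\sum_(k < n) expR (Z k j))^-1 * \sum_(k < n) expR (Z k j) * D k j.
  rewrite mulr_sumr; apply: eq_bigr => k _; rewrite /smx; ring.
under eq_bigr do rewrite mulrBr.
rewrite sumrB -mulr_suml hpc mul1r.
under [RHS]eq_bigr do rewrite -mulrA mulrBl.
rewrite -mulr_sumr sumrB hA; ring.
Qed.

Lemma dmx_entry {R : realType} n (A B : 'M[R]_n) (i j a b : 'I_n) :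
  (A *m delta_mx i j *m B) a b = A a i * B j b.
Proof.
rewrite !mxE (bigD1 j) //= big1 ?addr0; last first.
  move=> k /negbTE hk; rewrite !mxE big1 ?mul0r // => l _.
  by rewrite !mxE hk andbF mulr0.
rewrite !mxE (bigD1 i) //= big1 ?addr0; last first.
  by move=> l /negbTE hl; rewrite !mxE hl mulr0.
by rewrite !mxE !eqxx mulr1.
Qed.

Definition Gmx {R : realType} {n} (pw : 'I_n -> R) (pc : 'I_n -> 'I_n -> R)
  (Z : 'M[R]_n) : 'M[R]_n := \matrix_(a, b) (pw b * (smx Z a b - pc a b)).

Lemma grad_FZ {R : realType} n (pw : 'I_n -> R) (pc : 'I_n -> 'I_n -> R)
  (E Et W : 'M[R]_n) : (forall j, \sum_(i < n) pc i j = 1) ->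
  grad (fun W => FZ pw pc (Et^T *m W *m E)) W =
  Et *m Gmx pw pc (Et^T *m W *m E) *m E^T.
Proof.
move=> hpc; apply/matrixP => i j; rewrite /grad mxE derive1E.
set Z := Et^T *m W *m E; set D := Et^T *m delta_mx i j *m E.
have -> : (fun t => FZ pw pc (Et^T *m (W + t *: delta_mx i j) *m E)) =
   (fun t => FZ pw pc (Z + t *: D)).
  by apply/funext => t; rewrite mulmxDr mulmxDl -scalemxAr -scalemxAl.
case: (deriv_FZ _ pw pc Z D hpc) => _ ->.
rewrite !mxE; apply: eq_bigr => b _; rewrite !mxE mulr_suml; apply: eq_bigr => a _.
by rewrite /D dmx_entry !mxE; ring.
Qed.

Lemma step_Z {R : realType} n (pw : 'I_n -> R) (pc : 'I_n -> 'I_n -> R)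
  (E Et W : 'M[R]_n) (eta : R) : (forall j, \sum_(i < n) pc i j = 1) ->
  E^T *m E = 1%:M -> Et^T *m Et = 1%:M ->
  Et^T *m (W - eta *: grad (fun W => FZ pw pc (Et^T *m W *m E)) W) *m E =
  Et^T *m W *m E - eta *: Gmx pw pc (Et^T *m W *m E).
Proof.
move=> hpc hE hEt; rewrite grad_FZ // mulmxBr mulmxBl -scalemxAr -scalemxAl.
by rewrite !mulmxA hEt mul1mx -[_ *m E^T *m E]mulmxA hE mulmx1.
Qed.

Lemma smx_ge0 {R : realType} {n} (Z : 'M[R]_n) i j : 0 <= smx Z i j.
Proof.
rewrite /smx divr_ge0 ?expR_ge0 //; exact: ltW (sumexp_gt0 _ _ i).
Qed.

Lemma smx_le1 {R : realType} {n} (Z : 'M[R]_n) i j : smx Z i j <= 1.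
Proof.
rewrite /smx ler_pdivrMr ?(sumexp_gt0 _ _ i) // mul1r.
rewrite (bigD1 i) //= lerDl; apply: sumr_ge0 => k _; exact: expR_ge0.
Qed.

Lemma sum_smx {R : realType} {n} (Z : 'M[R]_n) j : \sum_(i < n) smx Z i j = 1.
Proof.
rewrite /smx -mulr_suml divff //; exact: lt0r_neq0 (sumexp_gt0 _ _ j).
Qed.

Lemma Z_bound {R : realType} n (pw : 'I_n -> R) (pc : 'I_n -> 'I_n -> R)
  (E Et : 'M[R]_n) (eta : R) : (forall j, \sum_(i < n) pc i j = 1) ->
  E^T *m E = 1%:M -> Et^T *m Et = 1%:M -> 0 <= eta ->
  (forall j, 0 <= pw j) -> (forall i j, 0 <= pc i j <= 1) ->
  forall t a b, `| (Et^T *m gd_iter (fun W => FZ pw pc (Et^T *m W *m E)) eta t *m E) a b|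
     <= t%:R * (eta * pw b).
Proof.
move=> hpc hE hEt heta hpw hpc01; elim => [|t IH] a b.
  by rewrite /gd_iter /= mulmx0 mul0mx mxE normr0 mul0r.
rewrite /gd_iter iterS -/(gd_iter _ eta t) step_Z //.
move: (IH a b).
set X := Et^T *m gd_iter _ eta t *m E.
have hG : `| Gmx pw pc X a b| <= pw b.
  rewrite mxE normrM ger0_norm // ler_piMr //.
  have := smx_ge0 X a b; have := smx_le1 X a b; have := hpc01 a b.
  move=> /andP [h1 h2] h3 h4; rewrite ler_norml; apply/andP; split; lra.
move: hG; set G := Gmx pw pc X; clearbody X G => hG hx.
rewrite !mxE.
rewrite -[t.+1]addn1 natrD mulrDl mul1r.
apply: le_trans (ler_normB _ _) _.
rewrite normrM ger0_norm //.
apply: lerD => //; exact: ler_wpM2l.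
Qed.

Lemma sum_const_neq {R : realType} K (j : 'I_K) (c : R) :
  \sum_(i < K | i != j) c = (K%:R - 1) * c.
Proof.
rewrite sumr_const cardC1 card_ord -mulr_natl.
case: K j => [[]//|K j] /=; by rewrite mulr1 -natr1 addrK mulr_natl.
Qed.

Lemma sum_pcond {R : realType} (alpha : R) K (j : 'I_K) :
  \sum_(i < K) pcond alpha i j = 1.
Proof.
rewrite (bigD1 j) //= /pcond eqxx.
under eq_bigr => i /negbTE hi do rewrite hi.
rewrite sum_const_neq.
have hK : K%:R != 0 :> R by rewrite pnatr_eq0; case: K j => [[]//|K j].
by field.
Qed.

Lemma pcond_gt0 {R : realType} (alpha : R) K (i j : 'I_K) :
  0 < alpha < 1 -> 0 < pcond alpha i j.
Proof.
move=> /andP [a0 a1].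
have hK : 0 < K%:R :> R by rewrite ltr0n; case: K i j => [[]//|K i j].
rewrite /pcond; case: (i == j); last exact: divr_gt0.
have := divr_gt0 a0 hK; lra.
Qed.

Lemma pcond_le1 {R : realType} (alpha : R) K (i j : 'I_K) :
  0 < alpha < 1 -> pcond alpha i j <= 1.
Proof.
move=> ha; rewrite -(sum_pcond alpha _ j) [X in _ <= X](bigD1 i) //= lerDl.
by apply: sumr_ge0 => k _; apply: ltW; apply: pcond_gt0.
Qed.

Lemma Lstar_eq {R : realType} (alpha : R) K (j : 'I_K) :
  Lstar alpha K = - \sum_(i < K) pcond alpha i j * ln (pcond alpha i j).
Proof.
rewrite (bigD1 j) //= /pcond eqxx.
under eq_bigr => i /negbTE hi do rewrite hi.
rewrite sum_const_neq /Lstar.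
have hK : K%:R != 0 :> R by rewrite pnatr_eq0; case: K j => [[]//|K j].
by field.
Qed.

Lemma Lstar_le {R : realType} (alpha : R) K :
  0 < alpha < 1 -> (0 < K)%N ->
  Lstar alpha K <= 1 + alpha * ln (K%:R) - alpha * ln alpha.
Proof.
move=> /andP [a0 a1] K0.
have hK1 : 1 <= K%:R :> R by rewrite ler1n.
have hK : 0 < K%:R :> R by lra.
set P := 1 - alpha + alpha / K%:R.
have hak : 0 < alpha / K%:R by exact: divr_gt0.
have hak1 : alpha / K%:R <= alpha by rewrite ler_pdivrMr // ler_peMr //; lra.
have hP0 : 0 < P by rewrite /P; lra.
have hP1 : P <= 1 by rewrite /P; lra.
have h1 : - P * ln P <= 1.
  have hPi : 0 < P^-1 by rewrite invr_gt0.
  have H : - ln P <= P^-1 - 1.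
    have := @le_ln1Dx R (P^-1 - 1).
    rewrite [1 + _]addrC subrK lnV ?posrE //; apply; lra.
  have : P * - ln P <= P * (P^-1 - 1) by rewrite ler_wpM2l // ltW.
  rewrite mulrBr mulfV ?gt_eqF // mulr1; lra.
have hlnK : 0 <= ln (K%:R : R) by exact: ln_ge0.
have hlna : ln alpha < 0 by apply: ln_lt0; lra.
have h2 : ln (alpha / K%:R) = ln alpha - ln (K%:R) by rewrite ln_div ?posrE.
pose u := (K%:R - 1) / K%:R : R.
have hu0 : 0 <= u by rewrite /u divr_ge0 //; lra.
have hu1 : u <= 1 by rewrite /u ler_pdivrMr // mul1r; lra.
have e : Lstar alpha K = - P * ln P + alpha * u * (ln (K%:R) - ln alpha).
  by rewrite /Lstar -/P h2 /u; ring.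
rewrite e.
have h3 : 0 <= alpha * (ln (K%:R) - ln alpha) * (1 - u).
  by apply: mulr_ge0; [apply: mulr_ge0; lra | lra].
have e2 : alpha * u * (ln (K%:R) - ln alpha) = alpha * (ln (K%:R) - ln alpha) - alpha * (ln (K%:R) - ln alpha) * (1 - u) by ring.
rewrite e2; lra.
Qed.

Lemma smx_gt0 {R : realType} {n} (Z : 'M[R]_n) i j : 0 < smx Z i j.
Proof. by rewrite /smx divr_gt0 ?expR_gt0 ?(sumexp_gt0 _ _ i). Qed.

Lemma KL_ge0 {R : realType} n (pc : 'I_n -> 'I_n -> R) (Z : 'M[R]_n) j :
  (forall i, 0 < pc i j) -> \sum_(i < n) pc i j = 1 ->
  0 <= \sum_(i < n) pc i j * (ln (pc i j) - ln (smx Z i j)).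
Proof.
move=> hpc hs.
have : \sum_(i < n) (pc i j - smx Z i j) <= \sum_(i < n) pc i j * (ln (pc i j) - ln (smx Z i j)).
  apply: ler_sum => i _.
  have hp := hpc i; have hsm := smx_gt0 Z i j.
  have H : ln (smx Z i j / pc i j) <= smx Z i j / pc i j - 1.
    have := @le_ln1Dx R (smx Z i j / pc i j - 1).
    rewrite [1 + _]addrC subrK; apply.
    have := divr_gt0 hsm hp; lra.
  rewrite ln_div ?posrE // in H.
  have : pc i j * (ln (smx Z i j) - ln (pc i j)) <= pc i j * (smx Z i j / pc i j - 1).
    by rewrite ler_wpM2l // ltW.
  have -> : pc i j * (smx Z i j / pc i j - 1) = smx Z i j - pc i j.
    by field; rewrite gt_eqF.
  lra.
by rewrite sumrB hs sum_smx subrr.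
Qed.

Lemma KL_tail {R : realType} n (pc : 'I_n -> 'I_n -> R) (Z : 'M[R]_n) j (B : R) :
  (forall i, 0 < pc i j) -> \sum_(i < n) pc i j = 1 ->
  (forall i, `|Z i j| <= B) ->
  ln (n%:R) - 2 * B + \sum_(i < n) pc i j * ln (pc i j)
    <= \sum_(i < n) pc i j * (ln (pc i j) - ln (smx Z i j)).
Proof.
move=> hpc hs hZ.
have hn : 0 < n%:R :> R by rewrite ltr0n; exact: (leq_ltn_trans (leq0n _) (ltn_ord j)).
have hS : ln (n%:R) - B <= ln (\sum_(k < n) expR (Z k j)).
  have e : ln (n%:R) - B = ln (n%:R * expR (- B)) by rewrite lnM ?posrE ?expR_gt0 // expRK.
  rewrite e ler_ln ?posrE ?mulr_gt0 ?expR_gt0 ?(sumexp_gt0 _ _ j) //.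
  have : \sum_(k < n) expR (- B) <= \sum_(k < n) expR (Z k j).
    apply: ler_sum => k _; rewrite ler_expR.
    by have := hZ k; rewrite ler_norml => /andP [? ?].
  by rewrite sumr_const card_ord mulr_natl.
have : \sum_(i < n) pc i j * (ln (n%:R) - 2 * B) <= \sum_(i < n) pc i j * (- ln (smx Z i j)).
  apply: ler_sum => i _; apply: ler_wpM2l; first exact: ltW (hpc i).
  rewrite ln_smx.
  have := hZ i; rewrite ler_norml => /andP [? ?]; lra.
rewrite -mulr_suml hs mul1r.
under [X in _ <= X -> _]eq_bigr do rewrite mulrN.
rewrite sumrN => H.
under [X in _ <= X]eq_bigr do rewrite mulrBr.
rewrite sumrB; lra.
Qed.

Lemma sum_div {R : realType} (G : nat -> R) M C : (0 < C)%N ->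
  \sum_(j < M * C) G (j %/ C)%N = C%:R * \sum_(i < M) G i.
Proof.
move=> C0.
rewrite -(big_mkord xpredT (fun j => G (j %/ C)%N)) -(big_mkord xpredT G).
elim: M => [|M IH]; first by rewrite mul0n !big_geq // mulr0.
rewrite mulSnr (@big_cat_nat _ _ _ (M * C)) ?leq_addr //= IH.
rewrite big_nat_recr //= mulrDr; congr (_ + _).
rewrite -{1}[(M * C)%N]add0n big_addn addKn.
rewrite (@eq_big_nat _ _ _ 0 C _ (fun _ => G M)); last first.
  by move=> i /andP [_ hi]; rewrite addnC divnMDl // divn_small // addn0.
by rewrite sumr_const_nat subn0 mulr_natl.
Qed.

Lemma bern {R : realType} (beta x : R) : 1 < beta -> 1 <= x ->
  (x + 1) `^ (- beta) <= (beta - 1)^-1 * (x `^ (- (beta - 1)) - (x + 1) `^ (- (beta - 1))).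
Proof.
move=> hb hx.
have hx0 : 0 < x by lra.
have hy0 : 0 < x + 1 by lra.
rewrite !powRE' //.
set a := ln x; set b := ln (x + 1).
have hab : (x + 1)^-1 <= b - a.
  have := @le_ln1Dx R (x / (x + 1) - 1).
  rewrite [1 + _]addrC subrK ln_div ?posrE // -/a -/b.
  have -> : x / (x + 1) - 1 = - (x + 1)^-1 by field; rewrite gt_eqF.
  move=> H; have : - (x + 1)^-1 > -1.
    rewrite ltrN2 invf_lt1 //; lra.
  move=> /H; lra.
set E := expR (- (beta - 1) * b).
set F := expR ((beta - 1) * (b - a)).
have hE : 0 < E by exact: expR_gt0.
have hF : 1 + (beta - 1) * (b - a) <= F by exact: expR_ge1Dx.
have e1 : expR (- (beta - 1) * a) = E * F by rewrite -expRD; congr expR; ring.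
have e2 : expR (- beta * b) = E * (x + 1)^-1.
  by rewrite -[(x + 1)^-1]lnK ?posrE ?invr_gt0 // lnV ?posrE // -/b -expRD; congr expR; ring.
rewrite e1 e2.
have hb1 : 0 < (beta - 1)^-1 by rewrite invr_gt0; lra.
have h : 0 <= E * (beta - 1)^-1 * (F - 1 - (beta - 1) * (x + 1)^-1).
  apply: mulr_ge0; first by apply: mulr_ge0; lra.
  have : (beta - 1) * (x + 1)^-1 <= (beta - 1) * (b - a) by rewrite ler_wpM2l //; lra.
  lra.
have e3 : E * (beta - 1)^-1 * (F - 1 - (beta - 1) * (x + 1)^-1) =
   (beta - 1)^-1 * (E * F - E) - E * (x + 1)^-1.
  by field; lra.
lra.
Qed.

Lemma zeta_bound {R : realType} (beta : R) m : 1 < beta ->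
  \sum_(k < m.+1) (k.+1)%:R `^ (- beta) <=
    1 + (beta - 1)^-1 - (beta - 1)^-1 * ((m.+1)%:R `^ (- (beta - 1))).
Proof.
move=> hb; elim: m => [|m IH].
  rewrite big_ord_recr big_ord0 /= add0r !powR1; lra.
rewrite big_ord_recr /= -[(m.+2)%:R]natr1.
have := @bern R beta (m.+1)%:R hb ltac:(by rewrite ler1n).
lra.
Qed.

Definition Zs {R : realType} (beta : R) M := \sum_(k < M) (k.+1)%:R `^ (- beta).

Lemma Zs_gt0 {R : realType} (beta : R) M : (0 < M)%N -> 0 < Zs beta M.
Proof.
case: M => // M _; rewrite /Zs big_ord_recl /= powR1.
have : 0 <= \sum_(i < M) (bump 0 i).+1%:R `^ (- beta) by apply: sumr_ge0 => i _; exact: powR_ge0.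
lra.
Qed.

Lemma Zs_le {R : realType} (beta : R) M : 1 < beta -> (0 < M)%N ->
  Zs beta M <= 1 + (beta - 1)^-1.
Proof.
case: M => // m hb _; have := zeta_bound beta m hb.
have := powR_ge0 (m.+1)%:R (- (beta - 1)).
have : 0 < (beta - 1)^-1 by rewrite invr_gt0; lra.
rewrite /Zs => h1 h2 h3.
have := mulr_ge0 (ltW h1) h2; lra.
Qed.

Lemma sum_ptil {R : realType} (beta : R) M : (0 < M)%N ->
  \sum_(i < M) ptil beta M i = 1.
Proof.
move=> M0; rewrite /ptil -mulr_suml -/(Zs beta M) divff //.
exact: lt0r_neq0 (Zs_gt0 beta M M0).
Qed.

Lemma ptil_eq {R : realType} (beta : R) M i :
  ptil beta M i = (i.+1)%:R `^ (- beta) * ptil beta M 0.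
Proof. by rewrite /ptil /= powR1 mul1r. Qed.

Lemma tail_count {R : realType} M :
  M%:R / 2 <= \sum_(i < M) ((M %/ 2 <= i)%N)%:R :> R.
Proof.
rewrite -(big_mkord xpredT (fun i => ((M %/ 2 <= i)%N)%:R)).
rewrite (@big_cat_nat _ _ _ (M %/ 2)) ?leq0n ?leq_div //=.
rewrite (@eq_big_nat _ _ _ 0 (M %/ 2) _ (fun _ => 0)); last first.
  by move=> i /andP [_ hi]; rewrite leqNgt hi.
rewrite (@eq_big_nat _ _ _ (M %/ 2) M _ (fun _ => 1)); last first.
  by move=> i /andP [hi _]; rewrite hi.
rewrite !sumr_const_nat mul0rn add0r natrB ?leq_div //.
have : ((M %/ 2) * 2 <= M)%N by exact: leq_divM.
rewrite -(ler_nat R) natrM => h.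
lra.
Qed.

Lemma tail_ptil {R : realType} (beta : R) M : 1 < beta -> (0 < M)%N ->
  (M%:R / 2) * M%:R `^ (- beta) / (1 + (beta - 1)^-1)
    <= \sum_(i < M) ((M %/ 2 <= i)%N)%:R * ptil beta M i.
Proof.
move=> hb M0.
have hZ := Zs_gt0 beta M M0; have hZle := Zs_le beta M hb M0.
have hU : 0 < 1 + (beta - 1)^-1.
  have : 0 < (beta - 1)^-1 by rewrite invr_gt0; lra.
  lra.
set c := M%:R `^ (- beta).
have hc : 0 <= c by exact: powR_ge0.
have ha : forall i : 'I_M, c <= (i.+1)%:R `^ (- beta).
  move=> i; rewrite /c !powRN lef_pV2 ?posrE ?powR_gt0 ?ltr0n //.
  by apply: ge0_ler_powR; rewrite ?nnegrE ?ler0n ?ler_nat //; lra.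
have e : \sum_(i < M) ((M %/ 2 <= i)%N)%:R * ptil beta M i =
  (\sum_(i < M) ((M %/ 2 <= i)%N)%:R * (i.+1)%:R `^ (- beta)) / Zs beta M.
  by rewrite mulr_suml; apply: eq_bigr => i _; rewrite /ptil mulrA.
rewrite e.
have h1 : (\sum_(i < M) ((M %/ 2 <= i)%N)%:R) * c <=
   \sum_(i < M) ((M %/ 2 <= i)%N)%:R * (i.+1)%:R `^ (- beta).
  by rewrite mulr_suml; apply: ler_sum => i _; apply: ler_wpM2l.
have h2 := @tail_count R M.
apply: ler_pM.
- by apply: mulr_ge0 => //; apply: divr_ge0.
- by rewrite invr_ge0 ltW.
- apply: le_trans h1; exact: ler_wpM2r.
- by rewrite lef_pV2 ?posrE.
Qed.

Lemma half_le (M i : nat) : (M %/ 2 <= i)%N -> (M <= i.+1 * 2)%N.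
Proof.
move: (divn_eq M 2) (ltn_pmod M (isT : (0 < 2)%N)).
move: (M %/ 2)%N (M %% 2)%N => q r; lia.
Qed.

Theorem theorem5p7 (R : realType) (beta alpha ceta a1 a2 : R) :
  1 < beta -> 0 < alpha < 1 -> 0 < ceta -> 0 < a1 -> a1 <= a2 ->
  exists c : R, 0 < c /\
  exists N : nat, forall M C : nat, (N <= M)%N -> (M <= C)%N ->
  forall E Et : 'M[R]_(M * C),
    E^T *m E = 1%:M -> Et^T *m Et = 1%:M ->
  forall (eta : R) (T : nat),
    0 < eta -> eta * (@ptil R beta M 0 / C%:R) <= ceta ->
    a1 * (M%:R `^ beta) <= T%:R <= a2 * (M%:R `^ beta) ->
    c * ln ((M * C)%:R) / (T%:R `^ (1 - beta^-1))
      <= @loss R beta alpha M C E Et (gd_iter (@loss R beta alpha M C E Et) eta T)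
         - Lstar alpha (M * C).
Proof.
move=> hb ha hce ha1 ha12.
have [a0 a1'] : 0 < alpha /\ alpha < 1 by move/andP: ha.
set s := beta - 1.
have hs : 0 < s by rewrite /s; lra.
set U := 1 + s^-1.
have hU : 0 < U.
  have : 0 < s^-1 by rewrite invr_gt0.
  rewrite /U; lra.
set g := 1 - beta^-1.
have hg : 0 <= g.
  have : beta^-1 < 1 by rewrite invf_lt1 //; lra.
  rewrite /g; lra.
set B0 := a2 * 2 `^ beta * ceta.
have hB0 : 0 <= B0 by rewrite /B0; apply: mulr_ge0; [apply: mulr_ge0; [lra|exact: powR_ge0]|lra].
set D0 := 2 * B0 + 1 - alpha * ln alpha.
set A := a1 `^ g.
have hA : 0 < A by exact: powR_gt0.
exists ((1 - alpha) * A / (4 * U)).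
split; first by apply: divr_gt0; [apply: mulr_gt0; lra | lra].
exists (Num.Def.archi_bound (expR (2 * D0 / (1 - alpha)))).+1.
move=> M C hNM hMC E Et hE hEt eta T heta hetac /andP [hT1 hT2].
have M0 : (0 < M)%N by exact: leq_trans (ltn0Sn _) hNM.
have C0 : (0 < C)%N by exact: leq_trans M0 hMC.
have hK0 : (0 < M * C)%N by rewrite muln_gt0 M0 C0.
have hMR : 1 <= M%:R :> R by rewrite ler1n.
have hKM : M%:R <= (M * C)%:R :> R by rewrite ler_nat leq_pmulr.
have hlnM : 2 * D0 / (1 - alpha) <= ln (M%:R : R).
  have h := @archi_boundP R (expR (2 * D0 / (1 - alpha))) (expR_ge0 _).
  have h2 : (Num.Def.archi_bound (expR (2 * D0 / (1 - alpha)))).+1%:R <= M%:R :> R by rewrite ler_nat.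
  rewrite -[X in X <= _]expRK ler_ln ?posrE ?expR_gt0 //; last lra.
  rewrite -natr1 in h2; lra.
have hlnK : ln (M%:R : R) <= ln ((M * C)%:R) by rewrite ler_ln ?posrE //; lra.
have hlnM0 : 0 <= ln (M%:R : R) by exact: ln_ge0.
pose pw := fun j : 'I_(M * C) => pitem beta j.
pose pc := fun i j : 'I_(M * C) => pcond alpha i j.
have hloss : loss beta alpha E Et = (fun W => FZ pw pc (Et^T *m W *m E)) by [].
rewrite hloss /=.
set Zt := Et^T *m gd_iter _ eta T *m E.
have hpc1 : forall j, \sum_(i < M * C) pc i j = 1 by move=> j; exact: sum_pcond.
have hpc0 : forall i j, 0 < pc i j by move=> i j; exact: pcond_gt0.
have hpc01 : forall i j, 0 <= pc i j <= 1.
  by move=> i j; rewrite ltW ?pcond_gt0 ?pcond_le1.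
have hptil0 : forall i, 0 <= ptil beta M i.
  move=> i; rewrite /ptil divr_ge0 ?powR_ge0 //; exact: ltW (Zs_gt0 beta M M0).
have hpw0 : forall j, 0 <= pw j.
  by move=> j; rewrite /pw /pitem divr_ge0 ?ler0n.
have hZb := Z_bound _ pw pc E Et eta hpc1 hE hEt (ltW heta) hpw0 hpc01 T.
rewrite -/Zt in hZb.
have hsumpw : \sum_(j < M * C) pw j = 1.
  rewrite /pw /pitem (sum_div (fun i => ptil beta M i / C%:R)) // -mulr_suml sum_ptil //.
  by rewrite mul1r mulfV // pnatr_eq0 -lt0n.
pose KL j := \sum_(i < M * C) pc i j * (ln (pc i j) - ln (smx Zt i j)).
have hex : FZ pw pc Zt - Lstar alpha (M * C) = \sum_(j < M * C) pw j * KL j.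
  rewrite -[Lstar _ _]mul1r -hsumpw mulr_suml /FZ -sumrN -sumrB.
  apply: eq_bigr => j _.
  rewrite (Lstar_eq alpha _ j) /KL.
  under [X in _ = _ * X]eq_bigr do rewrite mulrBr.
  rewrite sumrB; ring.
rewrite hex.
set L0 := (1 - alpha) / 2 * ln ((M * C)%:R : R).
have hD0 : 2 * D0 <= (1 - alpha) * ln ((M * C)%:R : R).
  have : (1 - alpha) * (2 * D0 / (1 - alpha)) <= (1 - alpha) * ln ((M * C)%:R : R).
    by rewrite ler_wpM2l; lra.
  have -> : (1 - alpha) * (2 * D0 / (1 - alpha)) = 2 * D0 by field; lra.
  done.
have hLs := Lstar_le alpha (M * C) ha hK0.
have htail : forall j : 'I_(M * C), (M %/ 2 <= j %/ C)%N -> L0 <= KL j.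
  move=> j hj.
  set i0 := (j %/ C)%N.
  have hi0 : (i0 < M)%N by rewrite /i0 ltn_divLR // ltn_ord.
  set B := T%:R * (eta * pw j).
  have hM2 : M%:R <= 2 * (i0.+1)%:R :> R.
    have : (M <= (i0.+1) * 2)%N by exact: half_le.
    by rewrite -(ler_nat R) natrM mulrC.
  have hX : M%:R `^ beta * (i0.+1)%:R `^ (- beta) <= 2 `^ beta.
    rewrite powRN -/(_ / _) ler_pdivrMr ?powR_gt0 ?ltr0n //.
    rewrite -powRM ?ler0n //.
    by apply: ge0_ler_powR; rewrite ?nnegrE ?mulr_ge0 ?ler0n //; lra.
  have hB : B <= B0.
    have e : B = (T%:R * (i0.+1)%:R `^ (- beta)) * (eta * (ptil beta M 0 / C%:R)).
      by rewrite /B /pw /pitem -/i0 (ptil_eq beta M i0); ring.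
    rewrite e /B0.
    apply: ler_pM.
    - by apply: mulr_ge0; [rewrite ler0n | exact: powR_ge0].
    - by apply: mulr_ge0; [lra | apply: divr_ge0; [exact: hptil0 | rewrite ler0n]].
    - apply: (@le_trans _ _ (a2 * M%:R `^ beta * (i0.+1)%:R `^ (- beta))).
        by apply: ler_wpM2r; [exact: powR_ge0 | done].
      rewrite -mulrA; apply: ler_wpM2l; lra.
    - done.
  have hZj : forall i, `|Zt i j| <= B by move=> i; exact: hZb.
  have := KL_tail _ pc Zt j B (fun i => hpc0 i j) (hpc1 j) hZj.
  rewrite -/(KL j).
  have -> : \sum_(i < M * C) pc i j * ln (pc i j) = - Lstar alpha (M * C).
    by rewrite (Lstar_eq alpha _ j) opprK.
  rewrite /L0 => h; rewrite /D0 in hD0; lra.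
have hlnK0 : 0 <= ln ((M * C)%:R : R) by lra.
have hL0 : 0 <= L0 by rewrite /L0; apply: mulr_ge0 => //; lra.
have hlow : \sum_(j < M * C) pw j * (((M %/ 2 <= j %/ C)%N)%:R * L0) <=
    \sum_(j < M * C) pw j * KL j.
  apply: ler_sum => j _; apply: ler_wpM2l => //.
  case: leqP => h; first by rewrite mul1r; exact: htail.
  rewrite mul0r; exact: (KL_ge0 _ pc Zt j (fun i => hpc0 i j) (hpc1 j)).
have hC : C%:R != 0 :> R by rewrite pnatr_eq0 -lt0n.
have heq : \sum_(j < M * C) pw j * (((M %/ 2 <= j %/ C)%N)%:R * L0) =
    L0 * \sum_(i < M) ((M %/ 2 <= i)%N)%:R * ptil beta M i.
  rewrite /pw /pitem (sum_div (fun i => ptil beta M i / C%:R * (((M %/ 2 <= i)%N)%:R * L0))) //.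
  rewrite !mulr_sumr; apply: eq_bigr => i _; by field.
apply: le_trans hlow; rewrite heq.
apply: le_trans (ler_wpM2l hL0 (tail_ptil beta M hb M0)).
rewrite -/s -/U.
set P := M%:R `^ s.
have hM0 : 0 < M%:R :> R by lra.
have hP : 0 < P by exact: powR_gt0.
have hMM : M%:R * M%:R `^ (- beta) = P^-1.
  rewrite /P -powRN.
  have -> : - s = 1 + - beta by rewrite /s; ring.
  rewrite powRD; last by apply/implyP => _; exact: lt0r_neq0.
  by rewrite powRr1 ?ler0n.
have hT0 : 0 < T%:R :> R.
  have := mulr_gt0 ha1 (powR_gt0 beta hM0); lra.
have hTg : A * P <= T%:R `^ g.
  have h1 : (a1 * M%:R `^ beta) `^ g <= T%:R `^ g.
    apply: ge0_ler_powR => //; rewrite nnegrE //.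
    by apply: mulr_ge0; [lra | exact: powR_ge0].
  rewrite powRM ?powR_ge0 // in h1; last lra.
  have e : (M%:R `^ beta) `^ g = P.
    by rewrite -powRrM /P /g /s; congr (_ `^ _); field; lra.
  by rewrite e in h1.
have eR : L0 * (M%:R / 2 * M%:R `^ (- beta) / U) =
    (1 - alpha) * A / (4 * U) * ln ((M * C)%:R : R) / (A * P).
  have e : M%:R / 2 * M%:R `^ (- beta) = P^-1 / 2 by rewrite mulrAC hMM.
  rewrite e /L0; field.
  by rewrite !gt_eqF.
rewrite eR.
apply: ler_wpM2l.
  apply: mulr_ge0 => //; apply: divr_ge0; [apply: mulr_ge0; lra | lra].
rewrite lef_pV2 ?posrE ?mulr_gt0 ?powR_gt0 //.
Qed.
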